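(* Let $G$ be the graph constructed as follows. Take three vertex-disjoint copies $H_1,H_2,H_3$ of $K_2\vee\overline{K_2}$ ($K_4$ minus an edge). In each $H_i$ choose a vertex $v_i$ of degree $2$. Add a new vertex $u$ adjacent to $v_1,v_2,v_3$. Then $G$ is a graph with $\Delta(G)=3$ containing no odd cycle of length greater than $3$, and $G$ is not $3$-edge-orientable.
   Context: $G_1\vee G_2$ denotes the join: the disjoint union of $G_1$ and $G_2$ plus all edges between them. An orientation of a graph is any digraph obtained by replacing each edge $xy$ with the arc $(x,y)$, with the arc $(y,x)$, or with both arcs. A kernel of a digraph $D$ is an independent set $S$ such that every vertex of $D-S$ has an out-neighbor in $S$. $D$ is kernel-perfect if every induced subdigraph of $D$ has a kernel. A graph $G$ is $k$-edge-orientable if its line graph $L(G)$ admits a kernel-perfect orientation in which every vertex has out-degree at most $k-1$. *)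

(* Defs.v *)
From mathcomp Require Import all_boot all_order.
Set Implicit Arguments. Unset Strict Implicit. Unset Printing Implicit Defensive.

(* A simple graph on a finite type T: a symmetric irreflexive relation. *)

Definition edge_set (T : finType) (e : rel T) : {set {set T}} :=
  [set [set x; y] | x in T, y in T & e x y].

(* Vertices of the line graph L(G): the edges of G. *)
Definition edge_of (T : finType) (e : rel T) := {A : {set T} | A \in edge_set e}.

Definition line_adj (T : finType) (e : rel T) : rel (edge_of e) :=
  fun A B => (A != B) && (val A :&: val B != set0).
Arguments line_adj {T} e.

Definition is_orientation (V : finType) (adj D : rel V) : Prop :=
  (forall x y, D x y -> adj x y) /\ (forall x y, adj x y -> D x y || D y x).

Definition is_kernel_of (V : finType) (D : rel V) (S K : {set V}) : Prop :=
  K \subset S /\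
  (forall x y, x \in K -> y \in K -> ~~ D x y) /\
  (forall x, x \in S -> x \notin K -> exists y, y \in K /\ D x y).

Definition kernel_perfect (V : finType) (D : rel V) : Prop :=
  forall S : {set V}, exists K : {set V}, is_kernel_of D S K.

Definition outdeg (V : finType) (D : rel V) (x : V) : nat := #|[set y | D x y]|.

Definition k_edge_orientable (T : finType) (e : rel T) (k : nat) : Prop :=
  exists D : rel (edge_of e),
    is_orientation (line_adj e) D /\ kernel_perfect D /\
    forall x, outdeg D x <= k.-1.

Definition max_degree (T : finType) (e : rel T) : nat :=
  \max_(x : T) #|[set y | e x y]|.

(* Cycles as (not necessarily induced) subgraphs: sequences of distinct
   vertices, consecutive ones adjacent, and last adjacent to first. *)
Definition no_odd_cycle_longer_than_3 (T : finType) (e : rel T) : Prop :=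
  forall s : seq T, uniq s -> cycle e s -> odd (size s) -> size s <= 3.

(* For i = 0,1,2 the copy H_i of K_2 v co-K_2
   has vertices 4i (a_i), 4i+1 (b_i) forming the K_2, and 4i+2 (c_i = v_i),
   4i+3 (d_i) forming the co-K_2 (degree 2 in H_i). Vertex 12 is u. *)
Definition G_edges : seq (nat * nat) :=
  [:: (0,1); (0,2); (0,3); (1,2); (1,3);
      (4,5); (4,6); (4,7); (5,6); (5,7);
      (8,9); (8,10); (8,11); (9,10); (9,11);
      (12,2); (12,6); (12,10)].

Definition Gadj : rel 'I_13 :=
  fun x y => ((nat_of_ord x, nat_of_ord y) \in G_edges)
          || ((nat_of_ord y, nat_of_ord x) \in G_edges).

(* Main.v *)
Require Import Defs.
From mathcomp Require Import all_boot all_order.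
Set Implicit Arguments. Unset Strict Implicit. Unset Printing Implicit Defensive.

Definition bchk (hp ph hq qh hr rh hs sh pq qp qr rq rs sr sp ps : bool) : bool :=
  ~~ [&& hp || ph, hq || qh, hr || rh, hs || sh, pq || qp, qr || rq,
  rs || sr, sp || ps,
  ~~ [&& hp, hq & hr], ~~ [&& hp, hq & hs], ~~ [&& hp, hr & hs],
  ~~ [&& hq, hr & hs], ~~ [&& qh, qp & qr], ~~ [&& rh, rq & rs],
  ~~ (ph && pq), ~~ (ph && ps), ~~ (pq && ps),
  ~~ (sh && sr), ~~ (sh && sp), ~~ (sr && sp),
  [|| ph && qh, hp && qp | hq && pq],
  [|| qh && rh, hq && rq | hr && qr],
  [|| rh && sh, hr && sr | hs && rs] &
  [|| ph && sh, hp && sp | hs && ps]].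

Definition bs := [:: true; false].
Lemma allbP (P : bool -> bool) : all P bs -> forall b, P b.
Proof. by move=> /= /and3P [? ? _] []. Qed.

Lemma all_ok : all (fun hp => all (fun ph => all (fun hq => all (fun qh =>
  all (fun hr => all (fun rh => all (fun hs => all (fun sh =>
  all (fun pq => all (fun qp => all (fun qr => all (fun rq =>
  all (fun rs => all (fun sr => all (fun sp => all (fun ps =>
  bchk hp ph hq qh hr rh hs sh pq qp qr rq rs sr sp ps) bs) bs) bs) bs) bs) bs) bs) bs)
  bs) bs) bs) bs) bs) bs) bs) bs.
Proof. vm_compute; reflexivity. Qed.

Lemma bchk_ok hp ph hq qh hr rh hs sh pq qp qr rq rs sr sp ps :
  bchk hp ph hq qh hr rh hs sh pq qp qr rq rs sr sp ps.
Proof.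
exact: (allbP (allbP (allbP (allbP (allbP (allbP (allbP (allbP (allbP (allbP
  (allbP (allbP (allbP (allbP (allbP (allbP all_ok hp) ph) hq) qh) hr) rh) hs) sh)
  pq) qp) qr) rq) rs) sr) sp) ps).
Qed.

Definition V := edge_of Gadj.

Lemma in_es (x y : 'I_13) : Gadj x y -> [set x; y] \in edge_set Gadj.
Proof. move=> H; apply/imset2P; exists x y => //; by rewrite inE. Qed.

Definition gn (m n : nat) := ((m,n) \in G_edges) || ((n,m) \in G_edges).
Definition mk (m n : nat) (Hm : m < 13) (Hn : n < 13) (H : gn m n) : V :=
  exist _ [set Ordinal Hm; Ordinal Hn] (@in_es (Ordinal Hm) (Ordinal Hn) H).
Notation E m n := (@mk m n isT isT isT).
Notation o k := (@Ordinal 13 k isT).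

Lemma ladj (X Y : V) (k j : 'I_13) : k \in val X -> k \in val Y ->
  j \in val X -> j \notin val Y -> line_adj Gadj X Y.
Proof.
move=> kX kY jX jY; apply/andP; split.
  by apply/eqP=> XY; move: jY; rewrite -XY jX.
by apply/set0Pn; exists k; rewrite inE kX kY.
Qed.

Lemma lneq (X Y : V) (j : 'I_13) : j \in val X -> j \notin val Y -> X != Y.
Proof. by move=> jX jY; apply/eqP=> XY; move: jY; rewrite -XY jX. Qed.

Ltac ladj_tac k j := apply: (@ladj _ _ (o k) (o j)); by rewrite /= !inE.

Lemma in3 (T : finType) (a b c y : T) : y \in [set a; b; c] -> [\/ y = a, y = b | y = c].
Proof. by rewrite !inE => /orP[/orP[]|] /eqP->; [constructor 1|constructor 2|constructor 3]. Qed.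

Lemma neqC (x y : V) : x != y -> y != x.
Proof. by apply: contraNneq => ->. Qed.
Lemma lneqV (y z : V) : line_adj Gadj y z -> y != z.
Proof. by case/andP. Qed.
Lemma nsymV (y z : V) : line_adj Gadj y z -> z != y.
Proof. by move=> /lneqV; apply: neqC. Qed.
Lemma lsym (y z : V) : line_adj Gadj y z -> line_adj Gadj z y.
Proof. by rewrite /line_adj setIC => /andP[/neqC -> ->]. Qed.
Ltac neq_tac := match goal with
| H : is_true (line_adj Gadj ?x ?y) |- is_true (?x != ?y) => exact: lneqV H
| H : is_true (line_adj Gadj ?y ?x) |- is_true (?x != ?y) => exact: nsymV H
| H : is_true (?x != ?y) |- is_true (?x != ?y) => exact: H
| H : is_true (?y != ?x) |- is_true (?x != ?y) => exact: neqC H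
end.

Section Dsec.
Variable D : rel V.
Hypothesis Dor : is_orientation (line_adj Gadj) D.
Hypothesis Dkp : kernel_perfect D.
Hypothesis Dout : forall x, outdeg D x <= 2.

Lemma Dirr x : ~~ D x x.
Proof. apply/negP=> /(proj1 Dor); by rewrite /line_adj eqxx. Qed.

Lemma tri a b c : line_adj Gadj a b -> line_adj Gadj b c -> line_adj Gadj a c ->
  [|| D b a && D c a, D a b && D c b | D a c && D b c].
Proof.
move=> ab bc ac.
have ab' := proj2 Dor _ _ ab; have bc' := proj2 Dor _ _ bc; have ac' := proj2 Dor _ _ ac.
have ba' : D b a || D a b by rewrite orbC.
have cb' : D c b || D b c by rewrite orbC.
have ca' : D c a || D a c by rewrite orbC.
have [K [KS [Kind Kabs]]] := Dkp [set a; b; c].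
move/subsetP: KS => KS.
have adjS y z : y \in [set a; b; c] -> z \in [set a; b; c] -> y != z -> D y z || D z y.
  move=> /in3[]-> /in3[]->; by rewrite ?eqxx.
have uK y z : y \in K -> z \in K -> y = z.
  move=> yK zK; apply/eqP; apply/negP=> /negP yz.
  have := adjS _ _ (KS _ yK) (KS _ zK) yz.
  by rewrite (negbTE (Kind _ _ yK zK)) (negbTE (Kind _ _ zK yK)).
have [x xK] : exists x, x \in K.
  case aK: (a \in K); first by exists a.
  have aS : a \in [set a; b; c] by rewrite !inE eqxx.
  have [y [yK _]] := Kabs a aS (negbT aK); by exists y.
have sink w : w \in [set a; b; c] -> w != x -> D w x.
  move=> wS wx; have wK : w \notin K by apply/negP=> wK; rewrite (uK _ _ wK xK) eqxx in wx.
  by have [y [yK Dwy]] := Kabs w wS wK; rewrite -(uK _ _ yK xK).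
have lneq' y z : line_adj Gadj y z -> y != z by case/andP.
have nsym y z : line_adj Gadj y z -> z != y.
  by move=> /andP[yz _]; apply/eqP=> zy; rewrite zy eqxx in yz.
have := KS _ xK; case/in3 => xe; subst x.
all: by rewrite !sink ?inE ?eqxx ?orbT //; first [by apply: lneq' | by apply: nsym].
Qed.

Lemma out3 x a b c : D x a -> D x b -> D x c -> a != b -> a != c -> b != c -> False.
Proof.
move=> xa xb xc ab ac bc; have := Dout x; rewrite /outdeg.
have u : uniq [:: a; b; c] by rewrite /= !inE negb_or ab ac bc.
have sub : {subset [:: a; b; c] <= enum [set y | D x y]}.
  by move=> y; rewrite mem_enum !inE => /orP[/eqP->|/orP[/eqP->|/eqP->]].
have := uniq_leq_size u sub; rewrite -cardE /=.
by move=> /leq_trans H /H.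
Qed.

Lemma gadget h p q r s e : line_adj Gadj h p -> line_adj Gadj h q ->
  line_adj Gadj h r -> line_adj Gadj h s -> line_adj Gadj p q ->
  line_adj Gadj q r -> line_adj Gadj r s -> line_adj Gadj s p ->
  line_adj Gadj e p -> line_adj Gadj e s ->
  p != r -> q != s -> h != e -> q != e -> r != e -> D e p || D e s.
Proof.
move=> Hhp Hhq Hhr Hhs Hpq Hqr Hrs Hsp Hep Hes Npr Nqs Nhe Nqe Nre.
case Ep: (D e p) => //; case Es: (D e s) => //=; exfalso.
have nep := negbT Ep; have nes := negbT Es.
have Dpe : D p e by move: (proj2 Dor _ _ Hep); rewrite (negbTE nep).
have Dse : D s e by move: (proj2 Dor _ _ Hes); rewrite (negbTE nes).
have := bchk_ok (D h p) (D p h) (D h q) (D q h) (D h r) (D r h) (D h s) (D s h)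
  (D p q) (D q p) (D q r) (D r q) (D r s) (D s r) (D s p) (D p s).
move/negP; apply.
repeat (apply/andP; split).
- exact: (proj2 Dor _ _ Hhp).
- exact: (proj2 Dor _ _ Hhq).
- exact: (proj2 Dor _ _ Hhr).
- exact: (proj2 Dor _ _ Hhs).
- exact: (proj2 Dor _ _ Hpq).
- exact: (proj2 Dor _ _ Hqr).
- exact: (proj2 Dor _ _ Hrs).
- exact: (proj2 Dor _ _ Hsp).
all: try (apply/negP => /and3P[a1 a2 a3]; apply: (out3 a1 a2 a3); neq_tac).
all: try (apply/negP => /andP[a2 a3]; apply: (out3 Dpe a2 a3); neq_tac).
all: try (apply/negP => /andP[a2 a3]; apply: (out3 Dse a2 a3); neq_tac).
- exact: tri Hhp Hpq Hhq.
- exact: tri Hhq Hqr Hhr.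
- exact: tri Hhr Hrs Hhs.
- exact: tri Hhp (lsym Hsp) Hhs.
Qed.
End Dsec.

Lemma out_final (D : rel V) (Dout : forall x, outdeg D x <= 2) x a b g1 g2 :
  D x a -> D x b -> D x g1 || D x g2 ->
  a != b -> a != g1 -> b != g1 -> a != g2 -> b != g2 -> False.
Proof.
move=> xa xb /orP[] xg ab ag1 bg1 ag2 bg2.
- exact: (out3 Dout xa xb xg).
- exact: (out3 Dout xa xb xg).
Qed.

Ltac lad k j := apply: (@ladj _ _ (o k) (o j)); by rewrite /= !inE.
Ltac lne j := apply: (@lneq _ _ (o j)); by rewrite /= !inE.

Lemma not_orient : ~ k_edge_orientable Gadj 3.
Proof.
move=> [D [Dor [Dkp Dout]]].
have Dout2 : forall x, outdeg D x <= 2 by [].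
have g0 : D (E 12 2) (E 0 2) || D (E 12 2) (E 1 2).
  apply: (@gadget D Dor Dkp Dout2 (E 0 1) (E 0 2) (E 0 3) (E 1 3) (E 1 2) (E 12 2)).
  lad 0 1. lad 0 1. lad 1 0. lad 1 0. lad 0 2. lad 3 0. lad 1 3. lad 2 1. lad 2 12. lad 2 12.
  lne 0. lne 0. lne 0. lne 0. lne 1.
have g1 : D (E 12 6) (E 4 6) || D (E 12 6) (E 5 6).
  apply: (@gadget D Dor Dkp Dout2 (E 4 5) (E 4 6) (E 4 7) (E 5 7) (E 5 6) (E 12 6)).
  lad 4 5. lad 4 5. lad 5 4. lad 5 4. lad 4 6. lad 7 4. lad 5 7. lad 6 5. lad 6 12. lad 6 12.
  lne 4. lne 4. lne 4. lne 4. lne 5.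
have g2 : D (E 12 10) (E 8 10) || D (E 12 10) (E 9 10).
  apply: (@gadget D Dor Dkp Dout2 (E 8 9) (E 8 10) (E 8 11) (E 9 11) (E 9 10) (E 12 10)).
  lad 8 9. lad 8 9. lad 9 8. lad 9 8. lad 8 10. lad 11 8. lad 9 11. lad 10 9. lad 10 12. lad 10 12.
  lne 8. lne 8. lne 8. lne 8. lne 9.
have a01 : line_adj Gadj (E 12 2) (E 12 6) by lad 12 2.
have a12 : line_adj Gadj (E 12 6) (E 12 10) by lad 12 6.
have a02 : line_adj Gadj (E 12 2) (E 12 10) by lad 12 2.
have o01 := proj2 Dor _ _ a01; have o12 := proj2 Dor _ _ a12; have o02 := proj2 Dor _ _ a02.
have := tri Dor Dkp a01 a12 a02.
case/or3P => /andP[d1 d2].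
- case/orP: o12 => d3.
  + apply: (out_final Dout2 d1 d3 g1); [exact: lneqV a02 | lne 12 ..].
  + apply: (out_final Dout2 d2 d3 g2); [exact: lneqV a01 | lne 12 ..].
- case/orP: o02 => d3.
  + apply: (out_final Dout2 d1 d3 g0); [exact: lneqV a12 | lne 12 ..].
  + apply: (out_final Dout2 d2 d3 g2); [exact: nsymV a01 | lne 12 ..].
- case/orP: o01 => d3.
  + apply: (out_final Dout2 d1 d3 g0); [exact: nsymV a12 | lne 12 ..].
  + apply: (out_final Dout2 d2 d3 g1); [exact: nsymV a02 | lne 12 ..].
Qed.


Lemma card_nat (P : 'I_13 -> bool) (g : nat -> bool) :
  (forall y, P y = g (val y)) -> #|[set y | P y]| = count g (iota 0 13).
Proof.
move=> Pg; rewrite cardsE cardE /enum_mem size_filter -enumT.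
rewrite -val_enum_ord count_map; apply: eq_count => y /=; exact: Pg.
Qed.

Lemma all13 (P : nat -> bool) : all P (iota 0 13) -> forall x : 'I_13, P x.
Proof. by move=> /allP H x; apply: H; rewrite mem_iota ltn_ord. Qed.

Lemma maxdeg : max_degree Gadj = 3.
Proof.
rewrite /max_degree; apply/eqP; rewrite eqn_leq; apply/andP; split.
  apply/bigmax_leqP => x _; rewrite (@card_nat _ (gn x)) //.
  by apply: (@all13 (fun x => count (gn x) (iota 0 13) <= 3)).
apply: leq_trans (leq_bigmax (o 12)); by rewrite (@card_nat _ (gn 12)).
Qed.

Lemma F1 (x y : 'I_13) : Gadj x y -> x != o 12 -> y != o 12 -> x %/ 4 = y %/ 4.
Proof.
have H := @all13 (fun m => all (fun n => gn m n ==> (m != 12) ==> (n != 12) ==> (m %/4 == n %/4)) (iota 0 13)) isT x.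
by move: (all13 H y) => /implyP Hi /Hi /implyP Hj /Hj /implyP Hk /Hk /eqP.
Qed.

Lemma F2 (x y : 'I_13) : Gadj (o 12) x -> Gadj (o 12) y -> x %/ 4 = y %/ 4 -> x = y.
Proof.
have H := @all13 (fun m => all (fun n => gn 12 m ==> gn 12 n ==> (m %/4 == n %/4) ==> (m == n)) (iota 0 13)) isT x.
move: (all13 H y) => /implyP Hi /Hi /implyP Hj /Hj /implyP Hk /eqP/Hk /eqP.
exact: val_inj.
Qed.

Lemma F3 (a : 'I_13) : count (fun n => n %/ 4 == a %/ 4) (iota 0 13) <= 4.
Proof. exact: (@all13 (fun a => count (fun n => n %/ 4 == a %/ 4) (iota 0 13) <= 4) isT a). Qed.

Lemma Gsym (x y : 'I_13) : Gadj x y = Gadj y x.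
Proof. by rewrite /Gadj orbC. Qed.

Lemma pcomp (a : 'I_13) t : path Gadj a t -> o 12 \notin a :: t ->
  forall y, y \in a :: t -> y %/ 4 = a %/ 4.
Proof.
elim: t a => [|b t IH] a /=.
  by move=> _ _ y; rewrite inE => /eqP->.
move=> /andP[ab pt]; rewrite !inE !negb_or => /and3P[ua ub ut] y.
rewrite eq_sym in ua; rewrite eq_sym in ub.
have eab := F1 ab ua ub.
rewrite inE => /orP[/eqP->//|yt].
rewrite (IH b pt) //; by rewrite inE negb_or eq_sym ub.
Qed.

Lemma nocyc : no_odd_cycle_longer_than_3 Gadj.
Proof.
move=> s us cs os.
case: (boolP (o 12 \in s)) => [us12 | nus].
  case: (rot_to us12) => i t Er.
  have ut : uniq (o 12 :: t) by rewrite -Er rot_uniq.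
  have ct : cycle Gadj (o 12 :: t) by rewrite -Er rot_cycle.
  have sz : size s = (size t).+1 by rewrite -(size_rot i s) Er.
  case: t Er ut ct sz => [|a t] Er ut ct sz; first by rewrite sz.
  clear Er; move: ct; rewrite /= rcons_path => /and3P[ua pt lu].
  move: ut; rewrite /= !inE negb_or => /andP[/andP[ua' ut'] /andP[at' _]].
  have nu : o 12 \notin a :: t by rewrite inE negb_or ua'.
  have el := pcomp pt nu (mem_last a t).
  rewrite Gsym in lu.
  have la := F2 lu ua el.
  case: t at' pt nu el la sz lu ut' => [|b t] at' pt nu el la sz lu ut'.
    by move: os; rewrite sz.
  by move: at'; rewrite -la /= mem_last.
case: s us cs os nus => [//|a t] us cs os nus.
move: cs; rewrite /= rcons_path => /andP[pt _].
have hc := pcomp pt nus.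
have : #|a :: t| <= #|[set y : 'I_13 | y %/ 4 == a %/ 4]|.
  apply: subset_leq_card; apply/subsetP => y ys; rewrite inE; apply/eqP; exact: hc.
move/card_uniqP: (us) => Hc.
rewrite Hc (@card_nat _ (fun n => n %/ 4 == a %/ 4)) // => Hle.
have := leq_trans Hle (F3 a); move: os.
rewrite /=; by case: (size t) => [|[|[|[|n]]]].
Qed.

Theorem mainTheorem20 :
  max_degree Gadj = 3 /\ no_odd_cycle_longer_than_3 Gadj /\
  ~ k_edge_orientable Gadj 3.
Proof. split; [exact: maxdeg | split; [exact: nocyc | exact: not_orient]]. Qed.
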